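(* Let $\mathcal X$ be a barreled topological real vector space, $\sigma$ a symplectic form on $\mathcal X$, $\mathcal X_{\rm bulk}\subset\mathcal X$ a linear subspace, $\mathcal X_{\rm bd}$ a topological real vector space, and $\partial:\mathcal X_{\rm bulk}'\to\mathcal X_{\rm bd}'$ a linear map whose restriction to $\mathcal X'$ (each $u\in\mathcal X'$ being regarded as an element of $\mathcal X_{\rm bulk}'$ by restriction to $\mathcal X_{\rm bulk}$) is continuous $\mathcal X'\to\mathcal X_{\rm bd}'$. Let $\eta$ be a symmetric bilinear form on $\mathcal X$ which is strictly positive ($(v\cdot\eta v)>0$ for $v\neq0$) and satisfies $|v_1\cdot\sigma v_2|\le (v_1\cdot\eta v_1)^{1/2}(v_2\cdot\eta v_2)^{1/2}$ for all $v_1,v_2\in\mathcal X$. Let $\mathcal X^{\rm cpl}$ be the real Hilbert space completion of $\mathcal X$ with respect to the inner product $\eta$, with extended inner product $\eta^{\rm cpl}$ (so $\mathcal X\subset\mathcal X^{\rm cpl}$). Assume (Hypothesis 1) that the map $\eta:\mathcal X\to\mathcal X'$, $v\mapsto (w\mapsto w\cdot\eta v)$, is continuous. Then: (i) for every $\tilde u\in\mathcal X^{\rm cpl}$ the functional $\eta^{\rm cpl}\tilde u: v\mapsto (v\cdot\eta^{\rm cpl}\tilde u)$ on $\mathcal X$ belongs to $\mathcal X'$, and for every $f\in\mathcal X_{\rm bd}$ the linear functional $\mathcal X^{\rm cpl}\ni\tilde u\mapsto \big(\partial(\eta^{\rm cpl}\tilde u)\big)(f)$ is continuous; hence there is a unique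 element $\partial' f\in\mathcal X^{\rm cpl}$ with $(\partial'f\cdot\eta^{\rm cpl}\tilde u)=\big(\partial(\eta^{\rm cpl}\tilde u)\big)(f)$ for all $\tilde u\in\mathcal X^{\rm cpl}$, i.e. $\mathrm{Ran}(\partial'\restriction\mathcal X_{\rm bd})\subset\mathcal X^{\rm cpl}$. (ii) If moreover (Hypothesis 2) for every $u\in\mathcal X'$ the condition $\partial u=0$ implies that $u$ vanishes on $\mathcal X_{\rm bulk}$, then $$\big(\{\partial'f: f\in\mathcal X_{\rm bd}\}\big)^{\rm cl}\supset(\mathcal X_{\rm bulk})^{\rm cl},$$ where both closures are taken in the Hilbert space $\mathcal X^{\rm cpl}$.
   Context: For a topological real vector space $\mathcal Y$, $\mathcal Y'$ denotes its continuous dual equipped with the weak$^*$ topology. For a bilinear form $\eta$ on $\mathcal X$, $(v_1\cdot\eta v_2)$ denotes its value on $v_1,v_2$. The map $\partial'$ is the dual of $\partial$; on $\mathcal X_{\rm bd}$ it is understood via the identification in (i). *)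

(* Defs.v *)
From HB Require Import structures.
From mathcomp Require Import all_boot all_order all_algebra.
From mathcomp Require Import all_classical all_reals all_analysis.
Set Implicit Arguments. Unset Strict Implicit. Unset Printing Implicit Defensive.
Import Order.TTheory GRing.Theory Num.Theory.
Import numFieldNormedType.Exports.
Local Open Scope classical_set_scope.
Local Open Scope ring_scope.

Section Defs.
Variable R : realType.

Definition lin_fun (V : lmodType R) (u : V -> R) :=
  forall (a : R) (x y : V), u (a *: x + y) = a * u x + u y.

Definition bilinear_form (V : lmodType R) (b : V -> V -> R) :=
  (forall w, lin_fun (fun v => b v w)) /\ (forall v, lin_fun (fun w => b v w)).

Definition symplectic_form (V : lmodType R) (s : V -> V -> R) :=
  [/\ bilinear_form s, (forall v, s v v = 0)
    & (forall v, (forall w, s v w = 0) -> v = 0)].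

Definition lin_subspace (V : lmodType R) (S : set V) :=
  S 0 /\ forall (a : R) x y, S x -> S y -> S (a *: x + y).

Definition in_dual (V : topologicalLmodType R) (u : V -> R) :=
  lin_fun u /\ continuous u.

(* element of the continuous dual S' of a subspace S (subspace topology),
   represented by any function V -> R whose restriction to S is that element *)
Definition in_sub_dual (V : topologicalLmodType R) (S : set V) (u : V -> R) :=
  (forall (a : R) x y, S x -> S y -> u (a *: x + y) = a * u x + u y)
  /\ {within S, continuous u}.

Definition convex_set_ (V : lmodType R) (B : set V) :=
  forall x y (t : R), B x -> B y -> 0 <= t <= 1 -> B (t *: x + (1 - t) *: y).
Definition balanced_set (V : lmodType R) (B : set V) :=
  forall x (a : R), B x -> `|a| <= 1 -> B (a *: x).
Definition absorbing_set (V : lmodType R) (B : set V) :=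
  forall x, exists2 r : R, 0 < r & forall t : R, `|t| <= r -> B (t *: x).
Definition barrel (V : topologicalLmodType R) (B : set V) :=
  [/\ closed B, convex_set_ B, balanced_set B & absorbing_set B].
Definition barreled (V : topologicalLmodType R) :=
  forall B : set V, barrel B -> nbhs (0 : V) B.

(* Continuity of T : V' -> W' (restricted to V'), both duals carrying the
   weak* topology, written out with the basic weak* neighbourhoods. *)
Definition weakstar_continuous_on_dual (V W : topologicalLmodType R)
    (T : (V -> R) -> (W -> R)) :=
  forall u0, in_dual u0 -> forall (G : seq W) (e : R), 0 < e ->
  exists (F : seq V) (d : R), 0 < d /\
    forall u, in_dual u -> (forall v, v \in F -> `|u v - u0 v| < d) ->
      forall f, f \in G -> `|T u f - T u0 f| < e.

(* Continuity of a map J : V -> V' (values in V', weak* topology). *)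
Definition continuous_to_weakstar_dual (V : topologicalLmodType R)
    (J : V -> (V -> R)) :=
  (forall v, in_dual (J v)) /\
  forall (v0 : V) (F : seq V) (e : R), 0 < e ->
    \forall v \near v0, forall w, w \in F -> `|J v w - J v0 w| < e.

Definition hilbert_inner (H : completeNormedModType R) (ip : H -> H -> R) :=
  [/\ bilinear_form ip, (forall x y, ip x y = ip y x)
    & (forall x, ip x x = `|x| ^+ 2)].

Definition is_completion (V : lmodType R) (eta : V -> V -> R)
    (H : completeNormedModType R) (ip : H -> H -> R) (iota : V -> H) :=
  [/\ hilbert_inner ip,
      (forall (a : R) x y, iota (a *: x + y) = a *: iota x + iota y),
      (forall v w, ip (iota v) (iota w) = eta v w)
    & closure (range iota) = setT].

End Defs.

(* Main.v *)
Require Import Defs.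
From HB Require Import structures.
From mathcomp Require Import all_boot all_order all_algebra.
From mathcomp Require Import all_classical all_reals all_analysis.
From mathcomp Require Import ring lra.
Import Order.TTheory GRing.Theory Num.Theory.
Import numFieldNormedType.Exports.
Local Open Scope classical_set_scope.
Local Open Scope ring_scope.

Section Lin.
Variables (R : realType) (V : lmodType R) (u : V -> R).
Hypothesis hu : lin_fun u.
Lemma lin0 : u 0 = 0.
Proof. have := hu 1 0 0; rewrite scaler0 addr0 mul1r => h; lra. Qed.
Lemma linZ a x : u (a *: x) = a * u x.
Proof. by rewrite -[a *: x]addr0 hu lin0 addr0. Qed.
Lemma linD x y : u (x + y) = u x + u y.
Proof. by rewrite -[x in LHS]scale1r hu mul1r. Qed.
Lemma linB x y : u (x - y) = u x - u y.
Proof. by rewrite linD -scaleN1r linZ mulN1r. Qed.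
End Lin.
Arguments lin0 {R V u}. Arguments linZ {R V u}. Arguments linD {R V u}. Arguments linB {R V u}.

Section Clo.
Variables (R : realType) (T : topologicalType) (g : T -> R) (A : set T).
Hypothesis gc : continuous g.
Lemma closure_le c : (forall x, A x -> g x <= c) -> forall x, closure A x -> g x <= c.
Proof.
move=> hA x cx; rewrite leNgt; apply/negP => hx.
have e0 : 0 < g x - c by rewrite subr_gt0.
have := @cvgr_dist_lt _ _ _ _ _ g (g x) (gc x) _ e0.
move=> hn; have [t [At /= ht]] := cx _ (hn _).
have := hA t At; move: ht; rewrite ltr_norml => /andP[h1 h2] h3. lra.
Qed.
Lemma closure_eq0 : (forall x, A x -> g x = 0) -> forall x, closure A x -> g x = 0.
Proof.
move=> hA x cx; case: (eqVneq (g x) 0) => // hx.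
have e0 : 0 < `|g x| by rewrite normr_gt0.
have := @cvgr_dist_lt _ _ _ _ _ g (g x) (gc x) _ e0.
move=> hn; have [t [At /= ht]] := cx _ (hn _).
by move: ht; rewrite (hA t At) subr0 ltxx.
Qed.
End Clo.
Arguments closure_le {R T g A}. Arguments closure_eq0 {R T g A}.

Section Hil.
Variables (R : realType) (H : completeNormedModType R) (ip : H -> H -> R).
Hypothesis hip : hilbert_inner ip.

Lemma ipC x y : ip x y = ip y x.
Proof. by case: hip. Qed.
Lemma ipN x : ip x x = `|x| ^+ 2.
Proof. by case: hip. Qed.
Lemma ipLl a x y z : ip (a *: x + y) z = a * ip x z + ip y z.
Proof. by case: hip => -[h _] _ _; exact: h. Qed.
Lemma ip0l z : ip 0 z = 0.
Proof.
have := ipLl 1 0 0 z; rewrite scaler0 addr0 mul1r => h; lra.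
Qed.
Lemma ipZl a x z : ip (a *: x) z = a * ip x z.
Proof. by rewrite -[a *: x]addr0 ipLl ip0l addr0. Qed.
Lemma ipDl x y z : ip (x + y) z = ip x z + ip y z.
Proof. by rewrite -[x in LHS]scale1r ipLl mul1r. Qed.
Lemma ipNl x z : ip (- x) z = - ip x z.
Proof. by rewrite -scaleN1r ipZl mulN1r. Qed.
Lemma ipBl x y z : ip (x - y) z = ip x z - ip y z.
Proof. by rewrite ipDl ipNl. Qed.
Lemma ip0r z : ip z 0 = 0.
Proof. by rewrite ipC ip0l. Qed.
Lemma ipZr a x z : ip z (a *: x) = a * ip z x.
Proof. by rewrite ipC ipZl ipC. Qed.
Lemma ipDr x y z : ip z (x + y) = ip z x + ip z y.
Proof. by rewrite ipC ipDl !(ipC z). Qed.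
Lemma ipBr x y z : ip z (x - y) = ip z x - ip z y.
Proof. by rewrite ipC ipBl !(ipC z). Qed.
Lemma ip_eq0 x : ip x x = 0 -> x = 0.
Proof. by rewrite ipN => /eqP; rewrite expf_eq0 /= normr_eq0 => /eqP. Qed.
Lemma ip_ge0 x : 0 <= ip x x.
Proof. by rewrite ipN exprn_ge0. Qed.

Lemma amgm x y : 2 * `|ip x y| <= `|x| ^+ 2 + `|y| ^+ 2.
Proof.
have h1 := ip_ge0 (x - y); have h2 := ip_ge0 (x + y).
rewrite ipBl !ipBr in h1; rewrite ipDl !ipDr in h2.
rewrite (ipC y x) !ipN in h1 h2.
case: (lerP 0 (ip x y)) => hs; [rewrite ger0_norm // | rewrite ltr0_norm //]; lra.
Qed.

Lemma CS x y : `|ip x y| <= `|x| * `|y|.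
Proof.
have [/eqP|] := eqVneq (`|x| * `|y|) 0.
  rewrite mulf_eq0 !normr_eq0 => /orP[]/eqP->; by rewrite ?ip0l ?ip0r normr0 ?mulr0 ?mul0r.
move=> nz.
have pos : 0 < `|x| * `|y| by rewrite lt_def nz mulr_ge0.
have := amgm (`|y| *: x) (`|x| *: y).
rewrite ipZl ipZr !normrZ !normr_id => h.
rewrite -(ler_pM2l pos); nra.
Qed.

Lemma ip_cont x : continuous (ip x).
Proof.
move=> h0; apply/(@cvgrPdist_lt _ _ _ (nbhs h0)) => e e0.
have xp : 0 < `|x| + 1 by rewrite ltr_wpDl.
have hN := @cvgr_dist_lt _ _ _ _ _ (@id H) h0 (@cvg_id _ _) (e / (`|x| + 1)) (divr_gt0 e0 xp).
near=> h.
have hh : `|h0 - h| < e / (`|x| + 1) by near: h; exact: hN.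
rewrite -ipBr.
apply: (le_lt_trans (CS _ _)).
rewrite ltr_pdivlMr // in hh.
have := normr_ge0 (h0 - h); have := normr_ge0 x. nra.
Unshelve. all: by end_near.
Qed.


Lemma exN (e : R) : 0 < e -> exists N : nat, N.+1%:R^-1 < e.
Proof.
move=> e0; exists (Num.truncn e^-1).
rewrite -[e in _ < e]invrK ltf_pV2 ?posrE ?invr_gt0 //.
exact: truncnS_gt.
Qed.

Lemma sq_cvg (T : Type) (F : set_system T) {FF : Filter F} (f : T -> H) a :
  f @ F --> a -> `|f x| ^+ 2 @[x --> F] --> `|a| ^+ 2.
Proof.
move=> /cvg_norm h; rewrite expr2.
under eq_fun do rewrite expr2.
exact: cvgM.
Qed.

Lemma proj (S : set H) : lin_subspace S -> forall y,
  exists2 m, closure S m & forall s, S s -> ip (y - m) s = 0.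
Proof.
move=> [S0 SL] y.
set D := [set r | exists2 s, S s & r = `|y - s| ^+ 2].
have hD : has_inf D.
  split; first by exists (`|y - 0| ^+ 2); exists 0.
  by exists 0 => r [s _ ->]; rewrite exprn_ge0.
set d := inf D.
have dle s : S s -> d <= `|y - s| ^+ 2.
  by move=> Ss; apply: (ge_inf hD.2); exists s.
have : forall n : nat, exists s, S s /\ `|y - s| ^+ 2 < d + n.+1%:R^-1.
  move=> n; have hp : 0 < n.+1%:R^-1 :> R by rewrite invr_gt0 ltr0Sn.
  have [r [s Ss ->] hr] := inf_adherent hp hD.
  by exists s.
move=> /choice [u hu].
have para (a b : H) : `|a - b| ^+ 2 + `|a + b| ^+ 2 = 2 * `|a| ^+ 2 + 2 * `|b| ^+ 2.
  rewrite -!ipN ipBl !ipBr ipDl !ipDr (ipC b a); ring.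
have cau n k : `|u n - u k| ^+ 2 <= 2 * n.+1%:R^-1 + 2 * k.+1%:R^-1.
  have := para (y - u k) (y - u n).
  have -> : y - u k - (y - u n) = u n - u k.
    by rewrite opprB addrC addrA subrK.
  have -> : y - u k + (y - u n) = 2 *: (y - 2^-1 *: (u k + u n)).
    rewrite scalerBr scalerA mulfV ?pnatr_eq0 // scale1r scaler_nat mulr2n opprD.
    by rewrite addrACA.
  have Smid : S (2^-1 *: (u k + u n)).
    rewrite -[_ *: _]addr0; apply: (SL) => //.
    by rewrite -[u k]scale1r; apply: (SL); [exact: (hu k).1 | exact: (hu n).1].
  have := dle _ Smid.
  rewrite normrZ exprMn ger0_norm //.
  have := (hu n).2; have := (hu k).2.
  move=> h1 h2 h3 h4. rewrite (expr2 (2:R)) in h4. move: (n.+1%:R^-1) (k.+1%:R^-1) h1 h2 h4 => a b h1 h2 h4. lra.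
have cu : cvg (u @ \oo).
  apply/cauchy_cvgP/cauchy_exP => e e0.
  have e40 : 0 < e ^+ 2 / 4 by rewrite divr_gt0 // exprn_gt0.
  have [N hN] := exN _ e40.
  exists (u N); exists N => // n /= Nn.
  rewrite -ball_normE /=.
  have hn : n.+1%:R^-1 <= N.+1%:R^-1 :> R.
    by rewrite lef_pV2 ?posrE ?ltr0Sn // ler_nat ltnS.
  have := cau N n. have := normr_ge0 (u N - u n).
  move=> h1 h2.
  have hsq : `|u N - u n| ^+ 2 < e ^+ 2.
    move: (n.+1%:R^-1) (N.+1%:R^-1) hn hN h2 => a b *; lra.
  move: (`|u N - u n|) h1 hsq => v h1; rewrite !expr2 => hsq; nra.
set m := lim (u @ \oo).
have um : u @ \oo --> m by exact: cu.
exists m.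
  apply: (@closed_cvg _ _ \oo _ u (closure S) (@closed_closure _ S) _ m um).
  by apply: nearW => n; apply: subset_closure; exact: (hu n).1.
move=> s Ss.
have hm : `|y - m| ^+ 2 <= d.
  apply/ler_addgt0Pr => eps eps0.
  have hc : `|y - u x| ^+ 2 @[x --> \oo] --> `|y - m| ^+ 2.
    by apply: sq_cvg; apply: cvgB => //; exact: cvg_cst.
  apply: (cvgr_to_le hc).
  have [N hN] := exN _ eps0.
  exists N => // n /= Nn.
  have hn : n.+1%:R^-1 <= N.+1%:R^-1 :> R.
    by rewrite lef_pV2 ?posrE ?ltr0Sn // ler_nat.
  have := (hu n).2.
  move: (n.+1%:R^-1) (N.+1%:R^-1) hn hN => a b *; lra.
have ht t : d <= `|y - (t *: s + m)| ^+ 2.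
  have hc : `|y - (t *: s + u x)| ^+ 2 @[x --> \oo] --> `|y - (t *: s + m)| ^+ 2.
    by apply: sq_cvg; apply: cvgB; [exact: cvg_cst | apply: cvgD => //; exact: cvg_cst].
  apply: (cvgr_to_ge hc).
  by apply: nearW => n /=; apply: dle; apply: (SL) => //; exact: (hu n).1.
have hexp t : `|y - (t *: s + m)| ^+ 2 =
    `|y - m| ^+ 2 - 2 * t * ip (y - m) s + t ^+ 2 * ip s s.
  have -> : y - (t *: s + m) = (y - m) - t *: s by rewrite opprD addrA addrAC.
  rewrite -!ipN; move: (y - m) => w; rewrite ipBl !ipBr !ipZl !ipZr (ipC s w); ring.
set A := ip (y - m) s.
set B := ip s s.
have B0 : 0 <= B by exact: ip_ge0.
have := ht (A / (B + 1)); rewrite hexp.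
set t := A / (B + 1).
have At : A = t * (B + 1) by rewrite /t mulfVK // gt_eqF // ltr_wpDl.
move=> h.
have t0 : t ^+ 2 * (B + 2) <= 0.
  move: (`|y - m| ^+ 2) hm h => q hm h.
  have tA : t * A = t ^+ 2 * (B + 1) by rewrite {1}At; ring.
  rewrite -/A -/B in h. clearbody t. lra.
have : t = 0.
  apply/eqP; rewrite -sqrf_eq0 eq_le sqr_ge0 andbT.
  have B2 : 0 < B + 2 by rewrite ltr_wpDl.
  by rewrite -(pmulr_lle0 _ B2).
by rewrite At => ->; rewrite mul0r.
Qed.


Lemma riesz (L : H -> R) : lin_fun L -> continuous L ->
  exists d, forall ut, ip d ut = L ut.
Proof.
move=> Ll Lc.
case: (pselect (exists z, L z != 0)); last first.
  move=> nz; exists 0 => ut; rewrite ip0l.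
  case: (eqVneq (L ut) 0) => // h; exfalso; apply: nz; by exists ut.
move=> [z Lz].
set K := [set k | L k = 0].
have KL : lin_subspace K.
  split; first exact: lin0.
  by move=> a x y Kx Ky; rewrite /K /= Ll Kx Ky mulr0 addr0.
have [m cm om] := proj _ KL z.
have Lm : L m = 0 := @closure_eq0 _ _ L K Lc (fun k Kk => Kk) m cm.
set z0 := z - m.
have Lz0 : L z0 = L z by rewrite /z0 linB // Lm subr0.
have ipz0 : ip z0 z0 != 0.
  apply/negP => /eqP /ip_eq0 h; move: Lz; rewrite -Lz0 h lin0 //; by rewrite eqxx.
exists ((L z0 / ip z0 z0) *: z0) => ut.
have Kk : K (ut - (L ut / L z0) *: z0).
  rewrite /K /= linB // linZ // mulfVK //; first by rewrite subrr.
  by rewrite Lz0.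
have := om _ Kk; rewrite -/z0 ipBr ipZr => /eqP; rewrite subr_eq0 => /eqP h.
rewrite ipZl h.
have Lz0n : L z0 != 0 by rewrite Lz0.
by field; apply/andP.
Qed.

Lemma ip_uniq d1 d2 : (forall ut, ip d1 ut = ip d2 ut) -> d1 = d2.
Proof.
move=> h; apply/eqP; rewrite -subr_eq0; apply/eqP; apply: ip_eq0.
by rewrite ipBl h subrr.
Qed.

End Hil.
Arguments CS {R H ip}. Arguments ip_cont {R H ip}. Arguments riesz {R H ip}.
Arguments ip_uniq {R H ip}. Arguments ip_eq0 {R H ip}. Arguments proj {R H ip} hip {S}.

Section Tvs.
Variables (R : realType) (X : topologicalLmodType R).

Lemma phi_cont (k : R) (v0 : X) : continuous (fun v : X => k *: (v - v0)).
Proof.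
move=> x.
have h1 : (fun v => v - v0) @ x --> x - v0.
  apply: (@continuous_comp X (X * X)%type X (fun v => (v, v0)) (fun z => z.1 - z.2)); last exact: sub_continuous.
  by apply: (@cvg_pair _ _ _ (nbhs x) (nbhs x) (nbhs v0)); [exact: cvg_id | exact: cvg_cst].
apply: (@continuous_comp X (R^o * X)%type X (fun v => (k, v - v0)) (fun z => z.1 *: z.2)); last exact: scale_continuous.
by apply: (@cvg_pair _ _ _ (nbhs x) (nbhs (k : R^o)) (nbhs (x - v0))); [exact: cvg_cst | exact: h1].
Qed.

Lemma barrel_cont (u : X -> R) (C : set X) : lin_fun u -> nbhs 0 C ->
  (forall b, C b -> `|u b| <= 1) -> continuous u.
Proof.
move=> ul nC hC v0; apply/(@cvgrPdist_lt _ _ _ (nbhs v0)) => e e0.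
set k := 2 / e.
have k0 : 0 < k by rewrite divr_gt0.
have hn : nbhs v0 ((fun v => k *: (v - v0)) @^-1` C).
  have := @phi_cont k v0 v0; rewrite /continuous_at subrr scaler0.
  by move=> /(_ C nC).
apply: filterS hn => v /= /hC.
rewrite linZ // linB // normrM (gtr0_norm k0) => h.
rewrite distrC; move: (`|u v - u v0|) (normr_ge0 (u v - u v0)) h => x x0 h.
have : 2 * x <= e by move: h; rewrite /k mulrAC ler_pdivrMr // mul1r.
lra.
Qed.

End Tvs.
Arguments barrel_cont {R X u C}.

Lemma near_seq (T : Type) (F : set_system T) {FF : Filter F} (A : eqType)
  (P : A -> T -> Prop) (s : seq A) :
  (forall a, \forall x \near F, P a x) ->
  \forall x \near F, forall a, a \in s -> P a x.
Proof.
move=> h; elim: s => [|a s IH].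
  by apply: nearW => x v; rewrite in_nil.
apply: filterS (filterI (h a) IH) => x [Pa Ps] v.
by rewrite in_cons => /orP[/eqP->|]; [exact: Pa | exact: Ps].
Qed.

Lemma norm_cont (R : realType) (T : topologicalType) (g : T -> R) :
  continuous g -> continuous (fun x => `|g x|).
Proof.
move=> gc x; apply: (@continuous_comp T R R g Num.norm x (gc x)).
exact: norm_continuous.
Qed.
Arguments norm_cont {R T g}.

Theorem lemma2p1 (R : realType) (X Xbd : topologicalLmodType R)
  (sigma eta : X -> X -> R) (Xbulk : set X)
  (dd : (X -> R) -> (Xbd -> R))
  (H : completeNormedModType R) (ip : H -> H -> R) (iota : X -> H) :
  barreled X ->
  symplectic_form sigma ->
  lin_subspace Xbulk ->
  (* dd : Xbulk' -> Xbd', well defined on restrictions, linear *)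
  (forall u v, in_sub_dual Xbulk u -> in_sub_dual Xbulk v ->
     (forall x, Xbulk x -> u x = v x) -> dd u = dd v) ->
  (forall u, in_sub_dual Xbulk u -> in_dual (dd u)) ->
  (forall (a : R) u v, in_sub_dual Xbulk u -> in_sub_dual Xbulk v ->
     dd (fun x => a * u x + v x) = (fun f => a * dd u f + dd v f)) ->
  (* its restriction to X' is continuous X' -> Xbd' (weak* topologies) *)
  weakstar_continuous_on_dual dd ->
  (* eta : symmetric, bilinear, strictly positive, dominating sigma *)
  bilinear_form eta ->
  (forall v w, eta v w = eta w v) ->
  (forall v, v != 0 -> 0 < eta v v) ->
  (forall v1 v2, `|sigma v1 v2| <= Num.sqrt (eta v1 v1) * Num.sqrt (eta v2 v2)) ->
  (* Hilbert completion of (X, eta) *)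
  is_completion eta ip iota ->
  (* Hypothesis 1 *)
  continuous_to_weakstar_dual (fun v : X => fun w : X => eta w v) ->
  (* (i) *)
  ((forall ut : H, in_dual (fun v : X => ip (iota v) ut)) /\
   (forall f : Xbd,
      lin_fun (fun ut : H => dd (fun v => ip (iota v) ut) f) /\
      continuous (fun ut : H => dd (fun v => ip (iota v) ut) f)) /\
   (forall f : Xbd, exists! d : H,
      forall ut : H, ip d ut = dd (fun v => ip (iota v) ut) f)) /\
  (* (ii) under Hypothesis 2 *)
  ((forall u, in_dual u -> (forall f, dd u f = 0) ->
      forall x, Xbulk x -> u x = 0) ->
   closure (iota @` Xbulk) `<=`
   closure [set d : H | exists f : Xbd,
              forall ut : H, ip d ut = dd (fun v => ip (iota v) ut) f]).
Proof.
move=> barX _ [Xb0 XbL] dd_wd dd_dual dd_lin dd_cont etaB etaS etaP _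
  [hipH iotaL iotaEta dense] [hyp1d hyp1c].
have ipLl' := @ipLl _ _ _ hipH.
have ipC' := @ipC _ _ _ hipH.
have ipZr' := @ipZr _ _ _ hipH.
have ipDr' := @ipDr _ _ _ hipH.
have ip0l' := @ip0l _ _ _ hipH.
have ipBl' := @ipBl _ _ _ hipH.
have ufL ut : lin_fun (fun v => ip (iota v) ut).
  by move=> a x y /=; rewrite iotaL ipLl'.
have etaI v w : eta v w = ip (iota v) (iota w) by rewrite iotaEta.
have etaC w : continuous (fun v => eta v w) := (hyp1d w).2.
have etaLw w : lin_fun (fun v => eta v w) := etaB.1 w.
have ufC ut : continuous (fun v => ip (iota v) ut).
  set B := [set v : X | forall w, `|ut - iota w| < 1 -> `|eta v w| <= 1].
  have bB : barrel B.
    split.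
    - move=> x cx w hw.
      apply: (@closure_le _ _ (fun v => `|eta v w|) B (norm_cont (etaC w)) 1 _ x cx).
      by move=> b Bb; exact: Bb w hw.
    - move=> x y t Bx By /andP[t0 t1] w hw /=.
      rewrite (etaLw w) (linZ (etaLw w)).
      have := Bx w hw; have := By w hw; rewrite !ler_norml => /andP[h1 h2] /andP[h3 h4].
      apply/andP; split; nra.
    - move=> x a Bx aa w hw; rewrite (linZ (etaLw w)) normrM.
      have := Bx w hw; have := normr_ge0 a; have:= normr_ge0 (eta x w); nra.
    - move=> x.
      set c := `|iota x| * (`|ut| + 1).
      have c0 : 0 <= c by rewrite mulr_ge0 // addr_ge0.
      have c1 : 0 < c + 1 by rewrite ltr_wpDl.
      exists (c + 1)^-1; first by rewrite invr_gt0.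
      move=> t ht w hw; rewrite (linZ (etaLw w)) normrM etaI.
      have hCS := CS hipH (iota x) (iota w).
      have hiw : `|iota w| <= `|ut| + 1.
        have -> : iota w = ut - (ut - iota w) by rewrite opprB addrCA subrr addr0.
        apply: (le_trans (ler_normB _ _)); rewrite lerD2l; exact: ltW.
      have h1 : `|ip (iota x) (iota w)| <= c.
        apply: (le_trans hCS); rewrite /c; apply: ler_wpM2l => //.
      move: ((c + 1)^-1) (mulVf (lt0r_neq0 c1)) ht => r hr ht.
      have r0 : 0 <= r by apply: le_trans ht.
      have := normr_ge0 t; have := normr_ge0 (ip (iota x) (iota w)).
      nra.
  have nB := barX B bB.
  apply: (barrel_cont (ufL ut) nB) => b Bb.
  set A := [set h | exists w, `|ut - iota w| < 1 /\ h = iota w].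
  apply: (@closure_le _ _ (fun h => `|ip (iota b) h|) A
           (norm_cont (ip_cont hipH (iota b))) 1 _ ut).
    by move=> h [w [hw ->]]; rewrite -etaI; exact: Bb w hw.
  move=> N hN.
  have hN' := filterI hN (nbhsx_ballx ut 1 ltr01).
  have : closure (range iota) ut by rewrite dense.
  move=> /(_ _ (hN' _)) [h [[w _ <-] [Nw bw]]].
  exists (iota w); split => //; exists w; split => //.
  by move: bw; rewrite -ball_normE.
have ufD ut : in_dual (fun v => ip (iota v) ut) by split; [exact: ufL | exact: ufC].
have subd ut : in_sub_dual Xbulk (fun v => ip (iota v) ut).
  split; first by move=> a x y _ _; exact: ufL.
  exact: continuous_subspaceT (ufC ut).
have LL f : lin_fun (fun ut => dd (fun v => ip (iota v) ut) f).
  move=> a x y /=.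
  have -> : (fun v => ip (iota v) (a *: x + y)) =
            (fun v => a * ip (iota v) x + ip (iota v) y).
    by apply: funext => v; rewrite ipDr' ipZr'.
  by rewrite (dd_lin a _ _ (subd x) (subd y)).
have LC f : continuous (fun ut => dd (fun v => ip (iota v) ut) f).
  move=> ut0; apply/(@cvgrPdist_lt _ _ _ (nbhs ut0)) => e e0.
  have [F [dl [dl0 hdd]]] := dd_cont _ (ufD ut0) [:: f] e e0.
  have hn : \forall ut \near ut0, forall v, v \in F ->
      `|ip (iota v) ut - ip (iota v) ut0| < dl.
    apply: near_seq => v.
    have := @cvgr_dist_lt _ _ _ _ _ (ip (iota v)) (ip (iota v) ut0)
      (ip_cont hipH (iota v) ut0) _ dl0.
    by move=> /(_ _); apply: filterS => ut; rewrite distrC.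
  apply: filterS hn => ut hut /=.
  rewrite distrC; apply: (hdd _ (ufD ut) hut f).
  by rewrite mem_head.
have Riesz f : exists d, forall ut, ip d ut = dd (fun v => ip (iota v) ut) f.
  exact: riesz hipH _ (LL f) (LC f).
split.
  split; first exact: ufD.
  split; first by move=> f; split; [exact: LL | exact: LC].
  move=> f; have [d hd] := Riesz f; exists d; split => // d' hd'.
  by apply: (ip_uniq hipH) => ut; rewrite hd hd'.
move=> hyp2 y cy.
set S := [set d : H | exists f : Xbd,
              forall ut : H, ip d ut = dd (fun v => ip (iota v) ut) f].
have SL : lin_subspace S.
  split.
    by exists 0 => ut; rewrite ip0l' (lin0 (dd_dual _ (subd ut)).1).
  move=> a x z [f1 h1] [f2 h2]; exists (a *: f1 + f2) => ut.
  by rewrite ipLl' h1 h2 (dd_dual _ (subd ut)).1.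
have [m cm om] := proj hipH SL y.
set w := y - m.
have dd0 f : dd (fun v => ip (iota v) w) f = 0.
  have [d hd] := Riesz f; rewrite -hd ipC'; apply: om; by exists f.
have hx := hyp2 _ (ufD w) dd0.
have ipw : ip w = (fun h => ip h w) by apply: funext => h; rewrite ipC'.
have yw : ip y w = 0.
  apply: (@closure_eq0 _ _ (fun h => ip h w) (iota @` Xbulk) _ _ y cy).
    by rewrite -ipw; exact: ip_cont.
  by move=> h [x Xx <-]; exact: hx.
have mw : ip m w = 0.
  apply: (@closure_eq0 _ _ (fun h => ip h w) S _ _ m cm).
    by rewrite -ipw; exact: ip_cont.
  by move=> s Ss; rewrite ipC'; exact: om.
have : w = 0 by apply: (ip_eq0 hipH); rewrite {1}/w ipBl' yw mw subrr.
by move/eqP; rewrite subr_eq0 => /eqP ->.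
Qed.
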